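(* Assume $2k+1 \le n/4$. Consider the random hard instance $\mathcal{D}$ and any randomized algorithm that makes exactly $n/4$ comparison queries. Let $C$ be the set of critical elements and $T$ the (random) set of elements that appear in at least one query made by the algorithm. Then $\mathbb{E}[|C \cap T|] \le \frac{2k+1}{2}$.
   Context: Model: $n$ elements, exactly $k$ corrupted; a tournament (comparison graph) says for each pair which is larger; restricted to uncorrupted elements it is acyclic, comparisons involving corrupted elements arbitrary. A comparison query reveals the orientation of one pair. Random hard instance $\mathcal{D}$: take $2k+1$ critical elements $c_0,\dots,c_{2k}$ consisting of the $k$ corrupted elements and the top $k+1$ uncorrupted elements, with comparisons among them forming the cyclic tournament in which $c_i$ is larger than $c_{i+1},\dots,c_{i+k}$ (indices mod $2k+1$); every critical element is larger than every non-critical element, and the $n-2k-1$ non-critical (uncorrupted) elements are totally ordered; then the labels (indices) of all $n$ elements are permuted uniformly at random. The set of critical elements is denoted $C$. Expectations are over the instance randomness and the algorithm's randomness. *)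

(* Defs.v *)
From mathcomp Require Import all_boot all_order all_algebra all_fingroup.
Set Implicit Arguments. Unset Strict Implicit. Unset Printing Implicit Defensive.
Import Order.TTheory GRing.Theory Num.Theory.

(* The labelling is a uniformly random
   permutation sigma : 'S_n; element x : 'I_n sits at "position" sigma x
   of the base structure:
   - positions 0 .. 2k are the critical elements c_0 .. c_{2k};
   - positions 2k+1 .. n-1 are the non-critical elements, totally ordered,
     smaller position = larger element.  *)

Definition is_critical (n k : nat) (sigma : 'S_n) (x : 'I_n) : bool :=
  (sigma x < 2 * k + 1)%N.

Definition beats (n k : nat) (sigma : 'S_n) (x y : 'I_n) : bool :=
  let i := nat_of_ord (sigma x) in
  let j := nat_of_ord (sigma y) in
  let m := (2 * k + 1)%N in
  if (i < m)%N then
    if (j < m)%N then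
      (* c_i beats c_{i+1}, ..., c_{i+k}  (indices mod 2k+1) *)
      (0 < (j + m - i) %% m <= k)%N
    else true
  else
    if (j < m)%N then false
    else (i < j)%N.

Definition critical_set (n k : nat) (sigma : 'S_n) : {set 'I_n} :=
  [set x | is_critical k sigma x].

(* A query-history: sequence of (queried pair, answer), the answer being
   true iff the first element is larger than the second. *)
Definition history (n : nat) := seq (('I_n * 'I_n) * bool).

Definition det_alg (n : nat) := history n -> 'I_n * 'I_n.

Fixpoint run (n k : nat) (alg : det_alg n) (sigma : 'S_n) (m : nat)
  : history n :=
  match m with
  | 0 => [::]
  | m'.+1 =>
      let h := run k alg sigma m' in
      let q := alg h in
      rcons h (q, beats k sigma q.1 q.2)
  end.

Definition touched (n k : nat) (alg : det_alg n) (sigma : 'S_n) (m : nat)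
  : {set 'I_n} :=
  [set x | has (fun e : ('I_n * 'I_n) * bool => (e.1.1 == x) || (e.1.2 == x))
               (run k alg sigma m)].

(* E[|C ∩ T|] for a randomized algorithm given as a probability
   distribution w over seeds s : S, each seed giving a deterministic
   adaptive algorithm alg s; sigma is uniform on 'S_n and independent of s. *)
Definition expected_hits (R : realFieldType) (n k : nat) (S : finType)
  (w : S -> R) (alg : S -> det_alg n) (m : nat) : R :=
  \sum_(s : S) w s *
    ((\sum_(sigma : 'S_n)
        (#|critical_set k sigma :&: touched k (alg s) sigma m|)%:R)
     / (n`!)%:R).

(* Main.v *)
Require Import Defs.
From mathcomp Require Import all_boot all_order all_algebra all_fingroup.
Import Order.TTheory GRing.Theory Num.Theory.
Set Implicit Arguments. Unset Strict Implicit. Unset Printing Implicit Defensive.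
From mathcomp Require Import zify.

Definition fo (T : eqType) (s : seq T) := rev (undup (rev s)).

Lemma mem_fo (T : eqType) (s : seq T) x : (x \in fo s) = (x \in s).
Proof. by rewrite /fo mem_rev mem_undup mem_rev. Qed.

Lemma uniq_fo (T : eqType) (s : seq T) : uniq (fo s).
Proof. by rewrite /fo rev_uniq undup_uniq. Qed.

Lemma size_fo (T : eqType) (s : seq T) : size (fo s) <= size s.
Proof. by rewrite /fo size_rev -(size_rev s) size_undup. Qed.

Lemma fo_cat (T : eqType) (s t : seq T) : exists z, fo (s ++ t) = fo s ++ z.
Proof.
by rewrite /fo rev_cat undup_cat rev_cat; eexists.
Qed.


Lemma cnt n b : #|[set i : 'I_n | i < b]| <= b.
Proof.
rewrite cardE -(size_map val) -[X in _ <= X](size_iota 0).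
apply: uniq_leq_size; first by rewrite map_inj_uniq ?enum_uniq //; apply: val_inj.
by move=> y /mapP[x]; rewrite mem_enum inE => xb ->; rewrite mem_iota.
Qed.

Lemma card_and n (P Q : pred 'I_n) :
  #|[set i | P i && Q i]| = \sum_(i | P i) (Q i : nat).
Proof.
rewrite -sum1_card big_mkcond [RHS]big_mkcond /=; apply: eq_bigr => i _.
by rewrite inE; case: (P i); case: (Q i).
Qed.

Lemma sym n c N : 2 * N <= n ->
  2 * \sum_(sigma : 'S_n) #|[set i : 'I_n | (i < N) && (sigma i < c)]| <= n`! * c.
Proof.
move=> hN; case: n hN => [|n] hN.
  rewrite big1 // => s _; apply/eqP; rewrite cards_eq0; by apply/eqP/setP => -[].
pose A i := \sum_(sigma : 'S_n.+1) (sigma i < c : nat).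
have eqA : forall i, A i = A ord0.
  move=> i; rewrite /A (reindex_inj (mulgI (tperm i ord0))).
  by apply: eq_bigr => s _; rewrite permM tpermL.
have E1 : \sum_(sigma : 'S_n.+1) #|[set i : 'I_n.+1 | (i < N) && (sigma i < c)]|
   = \sum_(i : 'I_n.+1 | i < N) A i.
  under eq_bigr do rewrite card_and.
  by rewrite exchange_big.
have E2 : n.+1 * A ord0 <= n.+1`! * c.
  have -> : n.+1 * A ord0 = \sum_(i : 'I_n.+1) A i.
    by rewrite (eq_bigr (fun _ => A ord0)) ?sum_nat_const ?card_ord // => i _; rewrite eqA.
  rewrite /A exchange_big -card_Sn -sum_nat_const.
  apply: leq_sum => s _.
  rewrite -(card_and (fun _ => true)) /=.
  have -> : [set i : 'I_n.+1 | s i < c] = s @^-1: [set q : 'I_n.+1 | q < c].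
    by apply/setP => i; rewrite !inE.
  by rewrite card_preimset ?cnt //; apply: perm_inj.
rewrite E1 (eq_bigr (fun _ => A ord0)) ?sum_nat_const; last by move=> i _; rewrite eqA.
have C : #|(fun i : 'I_n.+1 => i < N)| <= N.
  by have := cnt n.+1 N; rewrite cardsE.
apply: leq_trans E2; rewrite mulnA; apply: leq_mul => //.
by apply: leq_trans hN; rewrite leq_mul2l C orbT.
Qed.

Section Det.
Variables (n k : nat) (alg : det_alg n).

Definition flat (sigma : 'S_n) j : seq 'I_n :=
  flatten [seq [:: e.1.1; e.1.2] | e <- run k alg sigma j].

Lemma run_add sigma j d : exists z, run k alg sigma (j + d) = run k alg sigma j ++ z.
Proof.
elim: d => [|d [z IH]]; first by exists [::]; rewrite addn0 cats0.
rewrite addnS /=; rewrite IH; eexists; rewrite rcons_cat; reflexivity.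
Qed.

Lemma flat_add sigma j d : exists z, flat sigma (j + d) = flat sigma j ++ z.
Proof.
rewrite /flat; have [z ->] := run_add sigma j d.
by rewrite map_cat flatten_cat; eexists.
Qed.

Lemma flatS sigma j : flat sigma j.+1 =
  flat sigma j ++ [:: (alg (run k alg sigma j)).1; (alg (run k alg sigma j)).2].
Proof. by rewrite /flat /= map_rcons -cats1 flatten_cat. Qed.

Lemma size_flat sigma j : size (flat sigma j) = 2 * j.
Proof.
elim: j => [//|j IH]; rewrite flatS size_cat IH /=; lia.
Qed.

Lemma touchedE sigma j x : (x \in touched k alg sigma j) = (x \in flat sigma j).
Proof.
rewrite inE /flat; elim: (run k alg sigma j) => [//|e s IH] /=.
by rewrite IH !inE (eq_sym x) (eq_sym x) orbA.
Qed.

Variable m : nat.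

Definition u sigma := fo (flat sigma m).
Definition L sigma := u sigma ++ [seq x <- enum 'I_n | x \notin u sigma].

Lemma uniq_L sigma : uniq (L sigma).
Proof.
rewrite /L cat_uniq uniq_fo filter_uniq ?enum_uniq // andbT.
by apply/hasPn => x; rewrite mem_filter => /andP[].
Qed.

Lemma size_L sigma : size (L sigma) = n.
Proof.
have P : perm_eq (L sigma) (enum 'I_n).
  apply: uniq_perm; rewrite ?uniq_L ?enum_uniq // => x.
  by rewrite mem_cat mem_filter mem_enum andbT orbN.
by rewrite (perm_size P) size_enum_ord.
Qed.

Lemma mem_L sigma x : x \in L sigma.
Proof. by rewrite mem_cat mem_filter mem_enum andbT orbN. Qed.

Definition pif sigma (i : 'I_n) : 'I_n := nth i (L sigma) i.

Lemma pif_inj sigma : injective (pif sigma).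
Proof.
move=> i j; rewrite /pif (set_nth_default j); last by rewrite size_L.
move/eqP; rewrite nth_uniq ?size_L ?uniq_L // => /eqP; apply: val_inj.
Qed.

Definition pi sigma : 'S_n := perm (@pif_inj sigma).
Definition beta sigma : 'S_n := (pi sigma * sigma)%g.

Lemma betaE sigma i : beta sigma i = sigma (nth i (L sigma) i).
Proof. by rewrite /beta permM permE. Qed.

Lemma L_index sigma x (P : seq 'I_n) :
  x \in fo P -> (exists z, flat sigma m = P ++ z) ->
  index x (L sigma) = index x (fo P).
Proof.
move=> xP [z E]; rewrite /L /u E.
have [z' ->] := fo_cat P z.
by rewrite -catA index_cat xP.
Qed.

Lemma beta_inj : injective beta.
Proof.
move=> s1 s2 E.
have H : forall i, s1 (nth i (L s1) i) = s2 (nth i (L s2) i).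
  by move=> i; rewrite -!betaE E.
have Hr : forall j, j <= m -> run k alg s1 j = run k alg s2 j.
  elim=> [//|j IH] jm; rewrite /= -IH ?(ltnW jm) //.
  set q := alg _.
  have Hx : forall x, x \in [:: q.1; q.2] -> s1 x = s2 x.
    move=> x xq.
    have F : forall s, flat s j.+1 = flat s1 j.+1 ->
        exists z, flat s m = flat s1 j.+1 ++ z.
      move=> s Es; have [z Ez] := flat_add s j.+1 (m - j.+1).
      by rewrite subnKC // Es in Ez; exists z.
    have xin : x \in fo (flat s1 j.+1) by rewrite mem_fo flatS mem_cat xq orbT.
    have E2 : flat s2 j.+1 = flat s1 j.+1.
      by rewrite !flatS /flat -IH ?(ltnW jm).
    have I1 := L_index xin (F s1 erefl).
    have I2 := L_index xin (F s2 E2).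
    have lt : index x (fo (flat s1 j.+1)) < n.
      by rewrite -I1 -[X in _ < X](size_L s1) index_mem mem_L.
    have := H (Ordinal lt); rewrite /=.
    have e : forall s (d : 'I_n), index x (L s) = index x (fo (flat s1 j.+1)) ->
      nth d (L s) (index x (fo (flat s1 j.+1))) = x.
      by move=> s d <-; rewrite nth_index ?mem_L.
    by rewrite (e s1 _ I1) (e s2 _ I2).
  by rewrite /beats (Hx q.1) ?inE ?eqxx // (Hx q.2) ?inE ?eqxx ?orbT.
have EL : L s1 = L s2 by rewrite /L /u /flat Hr.
have Epi : pi s1 = pi s2 by apply/permP => i; rewrite !permE /pif EL.
by move: E; rewrite /beta Epi => /mulgI.
Qed.

Lemma hit_le sigma : #|critical_set k sigma :&: touched k alg sigma m|
  <= #|[set i : 'I_n | (i < 2 * m) && (beta sigma i < 2 * k + 1)]|.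
Proof.
apply: leq_trans (leq_imset_card (pi sigma) _).
apply: subset_leq_card; apply/subsetP => x; rewrite in_setI touchedE inE => /andP[cx tx].
have xu : x \in u sigma by rewrite mem_fo.
have lt : index x (L sigma) < n by rewrite -[X in _ < X](size_L sigma) index_mem mem_L.
apply/imsetP; exists (Ordinal lt).
  rewrite inE /= betaE nth_index ?mem_L //; rewrite /is_critical in cx; rewrite cx andbT.
  rewrite /L index_cat xu -(size_flat sigma m); apply: (@leq_trans (size (u sigma))); [by rewrite index_mem | exact: size_fo].
by apply: val_inj; rewrite /= permE /pif /= nth_index ?mem_L.
Qed.

Lemma det_bound : (2 * (2 * m) <= n) ->
  2 * \sum_(sigma : 'S_n) #|critical_set k sigma :&: touched k alg sigma m|
  <= n`! * (2 * k + 1).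
Proof.
move=> h; apply: leq_trans (sym (2 * k + 1) h).
rewrite leq_mul2l; apply/orP; right.
rewrite [X in _ <= X](reindex_inj beta_inj) /=.
by apply: leq_sum => s _; apply: hit_le.
Qed.
End Det.

Local Open Scope ring_scope.

Theorem mainTheorem9 (R : realFieldType) (n k : nat) (S : finType)
  (w : S -> R) (alg : S -> det_alg n) :
  (2 * k + 1 <= n %/ 4)%N ->
  (forall s, 0 <= w s) ->
  \sum_(s : S) w s = 1 ->
  (forall s (h : history n), (alg s h).1 != (alg s h).2) ->
  expected_hits k w alg (n %/ 4) <= (2 * k + 1)%:R / 2.
Proof.
move=> hk w0 w1 _.
have hm : (2 * (2 * (n %/ 4)) <= n)%N.
  by have := leq_divM n 4; lia.
rewrite /expected_hits.
apply: (@le_trans _ _ (\sum_s w s * ((2 * k + 1)%:R / 2))); last first.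
  by rewrite -big_distrl /= w1 mul1r.
apply: ler_sum => s _; apply: ler_wpM2l => //.
have fpos : (0 : R) < (n`!)%:R by rewrite ltr0n fact_gt0.
rewrite ler_pdivrMr // -natr_sum mulrAC ler_pdivlMr ?ltr0n // -!natrM ler_nat.
by rewrite mulnC (mulnC _ n`!); apply: det_bound.
Qed.
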